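(* Let $d$ be a positive integer and let $\mu,\nu,\rho$ be $d$-partitions with $\mu\prec\rho\succ\nu$. Then there exist a unique $d$-partition $\kappa$ and a unique nonnegative integer $m$ such that the cell with entry $m$ and bottom-left, top-left, bottom-right, top-right corners $\kappa,\mu,\nu,\rho$ satisfies the $d$-RSK local rule.
   Context: Partitions: finite weakly decreasing sequences of positive integers, $\lambda_i=0$ for $i>\ell(\lambda)$; $d$-partitions have $\ell\le d$; $\alpha\prec\beta$ (also $\beta\succ\alpha$) means $\beta_1\ge\alpha_1\ge\beta_2\ge\alpha_2\ge\cdots$. The $d$-RSK local rule for a cell with entry $m$ and corners $\kappa$ (bottom-left), $\mu$ (top-left), $\nu$ (bottom-right), $\rho$ (top-right) requires: all four are $d$-partitions, $\mu\succ\kappa\prec\nu$, $\mu\prec\rho\succ\nu$, $m=0$ or $\kappa_d=0$, $\rho_1+\kappa_d=m+\min(\mu_d,\nu_d)+\max(\mu_1,\nu_1)$, and $\rho_i+\kappa_{i-1}=\min(\mu_{i-1},\nu_{i-1})+\max(\mu_i,\nu_i)$ for $2\le i\le d$. *)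

(* Defs.v *)
From mathcomp Require Import all_boot.
Set Implicit Arguments. Unset Strict Implicit. Unset Printing Implicit Defensive.

(* Parts are indexed from 1: part l i = l_i,
   with l_i = 0 for i > size l (and, by convention, for i = 0). *)
Definition is_partition (l : seq nat) : bool :=
  all (fun x => 0 < x) l && sorted geq l.

Definition part (l : seq nat) (i : nat) : nat := nth 0 l i.-1.

Definition dpartition (d : nat) (l : seq nat) : bool :=
  is_partition l && (size l <= d).

Definition interlace (a b : seq nat) : Prop :=
  forall i, 1 <= i -> part a i <= part b i /\ part b i.+1 <= part a i.

Definition local_rule (d : nat) (m : nat) (kappa mu nu rho : seq nat) : Prop :=
  [&& dpartition d kappa, dpartition d mu, dpartition d nu & dpartition d rho] /\
  (interlace kappa mu /\ interlace kappa nu) /\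
  (interlace mu rho /\ interlace nu rho) /\
  (m = 0 \/ part kappa d = 0) /\
  part rho 1 + part kappa d
    = m + minn (part mu d) (part nu d) + maxn (part mu 1) (part nu 1) /\
  (forall i, 2 <= i <= d ->
    part rho i + part kappa i.-1
      = minn (part mu i.-1) (part nu i.-1) + maxn (part mu i) (part nu i)).

(* Main.v *)
Require Import Defs.
From mathcomp Require Import all_boot.
From mathcomp Require Import zify.

Lemma part_big l d i : size l <= d -> d < i -> part l i = 0.
Proof. move=> Hs Hi; rewrite /part nth_default //; lia. Qed.
Arguments part_big {l d i}.

Lemma build d : forall f : nat -> nat,
  (forall i, 0 < i -> f i.+1 <= f i) -> (forall i, d < i -> f i = 0) ->
  exists l, dpartition d l /\ forall i, 0 < i -> part l i = f i.
Proof.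
elim: d => [|d IH] f H1 H2.
  exists [::]; split. by []. by move=> i Hi; rewrite H2 // /part nth_nil.
have [Ef|Ef] := eqVneq (f 1) 0.
  exists [::]; split. by []. move=> i Hi; rewrite /part nth_nil.
  elim: i Hi => [//|i IHi] _.
  case: i IHi => [|i] IHi; first by rewrite Ef.
  have := H1 i.+1 isT; rewrite -IHi //; lia.
have [l' [Hl' Hp]] := IH (fun i => f i.+1) (fun i Hi => H1 i.+1 isT)
  (fun i Hi => H2 i.+1 Hi).
exists (f 1 :: l'); split; last first.
  by move=> [|[|i]] //= _; have := Hp i.+1 isT; rewrite /part /=.
move: Hl'; rewrite /dpartition /is_partition /= => /andP[/andP[Ha Hs] Hsz].
rewrite lt0n Ef /= Ha /= ltnS Hsz andbT.
case: l' Hp Ha Hs {Hsz} => [//|y s] Hp _ Hs.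
move: Hs => /= ->; rewrite andbT; have := Hp 1 isT; rewrite /part /= => ->.
exact: (H1 1 isT).
Qed.

Lemma part_inj l1 l2 : is_partition l1 -> is_partition l2 ->
  (forall i, 0 < i -> part l1 i = part l2 i) -> l1 = l2.
Proof.
rewrite /is_partition => /andP[/allP A1 _] /andP[/allP A2 _] H.
have Hn j : nth 0 l1 j = nth 0 l2 j by exact: (H j.+1).
have P1 j : j < size l1 -> 0 < nth 0 l1 j by move=> Hj; apply: A1; apply: mem_nth.
have P2 j : j < size l2 -> 0 < nth 0 l2 j by move=> Hj; apply: A2; apply: mem_nth.
have Hsz : size l1 = size l2.
  case: (ltngtP (size l1) (size l2)) => // Hlt.
    by have := P2 _ Hlt; rewrite -Hn nth_default.
  by have := P1 _ Hlt; rewrite Hn nth_default.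
by apply: (eq_from_nth Hsz) => j _; apply: Hn.
Qed.

Theorem lemma6p2 (d : nat) (mu nu rho : seq nat) :
  0 < d ->
  dpartition d mu -> dpartition d nu -> dpartition d rho ->
  interlace mu rho -> interlace nu rho ->
  exists kappa : seq nat, exists m : nat,
    local_rule d m kappa mu nu rho /\
    (forall (kappa' : seq nat) (m' : nat),
        local_rule d m' kappa' mu nu rho -> kappa' = kappa /\ m' = m).
Proof.
move=> Hd Hmu Hnu Hrho Imu Inu.
have Smu : size mu <= d by case/andP: Hmu.
have Snu : size nu <= d by case/andP: Hnu.
set S := minn (part mu d) (part nu d) + maxn (part mu 1) (part nu 1).
pose f i := if i < d then minn (part mu i) (part nu i)
    + maxn (part mu i.+1) (part nu i.+1) - part rho i.+1
  else if i == d then S - part rho 1 else 0.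
have claim i : 0 < i -> f i <= part mu i /\ f i <= part nu i /\
    part mu i.+1 <= f i /\ part nu i.+1 <= f i.
  move=> Hi; rewrite /f; case: (ltngtP i d) => Hid.
  - have [a1 a2] := Imu i Hi; have [b1 b2] := Inu i Hi.
    have [a3 a4] := Imu i.+1 isT; have [b3 b4] := Inu i.+1 isT; lia.
  - rewrite (part_big Smu Hid) (part_big Snu Hid).
    rewrite (@part_big _ _ i.+1 Smu) ?(@part_big _ _ i.+1 Snu); lia.
  - subst i; rewrite (@part_big _ _ d.+1 Smu) ?(@part_big _ _ d.+1 Snu) //.
    have [a1 a2] := Imu 1 isT; have [b1 b2] := Inu 1 isT.
    rewrite /S; lia.
have [kappa [Hk Hp]] := @build d f
  (fun i Hi => let: conj a _ := claim i.+1 isT in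
               let: conj _ (conj _ (conj b _)) := claim i Hi in leq_trans a b)
  (fun i Hi => ltac:(rewrite /f ltnNge (ltnW Hi) /= gtn_eqF //)).
have Skap : size kappa <= d by case/andP: Hk.
have fd : f d = S - part rho 1 by rewrite /f ltnn eqxx.
exists kappa, (part rho 1 - S); split.
  split; first by rewrite Hk Hmu Hnu Hrho.
  split; first by split=> i Hi; rewrite Hp //; have := claim i Hi; lia.
  split; first by [].
  rewrite Hp // fd; split; first lia.
  split; first lia.
  move=> i /andP[H2 H3]; rewrite Hp; last lia.
  rewrite /f ifT; last lia.
  have [a1 a2] := Imu i.-1 ltac:(lia); have [b1 b2] := Inu i.-1 ltac:(lia).
  rewrite prednK in a2 b2 *; try lia.
move=> kappa' m' [/and4P[Hk' _ _ _] [_ [_ [Hm [E1 E2]]]]].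
have Skap' : size kappa' <= d by case/andP: Hk'.
have Ed : part kappa' d = S - part rho 1 /\ m' = part rho 1 - S
  by rewrite /S; lia.
case: Ed => Ed Em; split => //.
apply: part_inj; [by case/andP: Hk' | by case/andP: Hk |].
move=> i Hi; rewrite Hp //; case: (ltngtP i d) => Hid.
- have := E2 i.+1 ltac:(lia); rewrite /f Hid /=.
  have [a1 a2] := Imu i Hi; have [b1 b2] := Inu i Hi; lia.
- by rewrite (part_big Skap' Hid) /f ltnNge (ltnW Hid) /= gtn_eqF.
- by subst i; rewrite fd.
Qed.
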